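(* Let $\rho_1, \sigma_1$ be commuting density operators on $\mathbb{C}^2$ and let $\rho_2, \sigma_2$ be density operators on $\mathbb{C}^d$. The following two conditions are equivalent: (i) there exists a completely positive trace-preserving map $\mathcal{E}$ from operators on $\mathbb{C}^2$ to operators on $\mathbb{C}^d$ such that $\mathcal{E}(\rho_1)=\rho_2$ and $\mathcal{E}(\sigma_1)=\sigma_2$; (ii) $D_{\max}(\rho_1\|\sigma_1)\ge D_{\max}(\rho_2\|\sigma_2)$ and $D_{\max}(\sigma_1\|\rho_1)\ge D_{\max}(\sigma_2\|\rho_2)$.
   Context: For density operators $\rho,\sigma$, the max-divergence is $D_{\max}(\rho\|\sigma) := \inf\{\lambda\in\mathbb{R} : \rho \le 2^{\lambda}\sigma\}$ (with $\inf\emptyset=+\infty$), where $\le$ is the Löwner order and $\log$ is base 2. *)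

(* Defs.v *)
From HB Require Import structures.
From mathcomp Require Import all_boot all_order all_algebra.
From mathcomp Require Import all_classical all_reals all_analysis.
From mathcomp Require Import complex mxtens.

Set Implicit Arguments.
Unset Strict Implicit.
Unset Printing Implicit Defensive.

Import Order.TTheory GRing.Theory Num.Theory.
Local Open Scope ring_scope.

Section QDefs.
Variable R : realType.
Local Notation C := (R[i]).

Definition adjmx {m n} (A : 'M[C]_(m, n)) : 'M[C]_(n, m) :=
  map_mx (@conjc R) A^T.

Definition psdmx {n} (A : 'M[C]_n) : Prop :=
  adjmx A = A /\ forall v : 'cV[C]_n, 0 <= (adjmx v *m A *m v) 0 0.

Definition loewner_le {n} (A B : 'M[C]_n) : Prop := psdmx (B - A).

Definition density {n} (A : 'M[C]_n) : Prop := psdmx A /\ \tr A = 1.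

(* max-divergence D_max(rho||sigma) = inf { l in R | rho <= 2^l sigma },
   as an extended real (inf of the empty set is +oo); 2^l = powR 2 l. *)
Definition Dmax {n} (rho sigma : 'M[C]_n) : \bar R :=
  ereal_inf [set (l%:E)%E | l in
     [set l : R | loewner_le rho ((real_complex R (powR 2 l)) *: sigma)]].

Definition blockmx {k m} (X : 'M[C]_(k * m)) (i j : 'I_k) : 'M[C]_m :=
  \matrix_(a, b) X (mxtens_index (i, a)) (mxtens_index (j, b)).

(* the ampliation id_k (x) E, acting blockwise on 'M_(k*m) *)
Definition ampliation {m n} k (E : 'M[C]_m -> 'M[C]_n) (X : 'M[C]_(k * m))
  : 'M[C]_(k * n) :=
  \matrix_(p, q)
     E (blockmx X (mxtens_unindex p).1 (mxtens_unindex q).1)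
       (mxtens_unindex p).2 (mxtens_unindex q).2.

Definition completely_positive {m n} (E : 'M[C]_m -> 'M[C]_n) : Prop :=
  forall (k : nat) (X : 'M[C]_(k * m)), psdmx X -> psdmx (@ampliation m n k E X).

Definition trace_preserving {m n} (E : 'M[C]_m -> 'M[C]_n) : Prop :=
  forall X : 'M[C]_m, \tr (E X) = \tr X.

Definition cptp {m n} (E : 'M[C]_m -> 'M[C]_n) : Prop :=
  linear E /\ completely_positive E /\ trace_preserving E.

End QDefs.

(* Main.v *)
Require Import Defs.
From HB Require Import structures.
From mathcomp Require Import all_boot all_order all_algebra.
From mathcomp Require Import all_classical all_reals all_analysis.
From mathcomp Require Import complex mxtens.
From mathcomp Require Import ring lra.
Import Order.TTheory GRing.Theory Num.Theory.
Local Open Scope ring_scope.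
Set Implicit Arguments.
Unset Strict Implicit.
Unset Printing Implicit Defensive.
Section Q.
Variable R : realType.
Local Notation C := (R[i]).

Lemma adjmxM m n p (A : 'M[C]_(m,n)) (B : 'M[C]_(n,p)) :
  adjmx (A *m B) = adjmx B *m adjmx A.
Proof. by rewrite /adjmx trmx_mul map_mxM. Qed.

Lemma adjmxK m n (A : 'M[C]_(m,n)) : adjmx (adjmx A) = A.
Proof.
by apply/matrixP => i j; rewrite /adjmx !mxE conjcK.
Qed.

Lemma adjmxD m n (A B : 'M[C]_(m,n)) : adjmx (A + B) = adjmx A + adjmx B.
Proof. by apply/matrixP => i j; rewrite /adjmx !mxE rmorphD. Qed.

Lemma adjmxZ m n a (A : 'M[C]_(m,n)) : adjmx (a *: A) = a^* *: adjmx A.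
Proof. by apply/matrixP => i j; rewrite /adjmx !mxE rmorphM. Qed.

Definition qf n (A : 'M[C]_n) (v : 'cV[C]_n) := (adjmx v *m A *m v) 0 0.
Definition bf n (u : 'cV[C]_n) (A : 'M[C]_n) (w : 'cV[C]_n) :=
  (adjmx u *m A *m w) 0 0.

Lemma qfE n (A : 'M[C]_n) (v : 'cV[C]_n) :
  qf A v = \sum_(i < n) \sum_(j < n) ((v i 0)^* * A i j * v j 0).
Proof.
rewrite /qf mxE; under eq_bigr do rewrite mxE big_distrl /=.
rewrite exchange_big /=; apply: eq_bigr => i _; apply: eq_bigr => j _.
by rewrite /adjmx !mxE.
Qed.

Lemma qfD n (A B : 'M[C]_n) v : qf (A + B) v = qf A v + qf B v.
Proof. by rewrite /qf mulmxDr mulmxDl mxE. Qed.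

Lemma qfZ n a (A : 'M[C]_n) v : qf (a *: A) v = a * qf A v.
Proof. by rewrite /qf -scalemxAr -scalemxAl mxE. Qed.

Lemma qfN n (A : 'M[C]_n) v : qf (- A) v = - qf A v.
Proof. by rewrite -scaleN1r qfZ mulN1r. Qed.

Lemma qfB n (A B : 'M[C]_n) v : qf (A - B) v = qf A v - qf B v.
Proof. by rewrite qfD qfN. Qed.

Lemma qf_conj n m (A : 'M[C]_n) (B : 'M[C]_(n, m)) v :
  qf (adjmx B *m A *m B) v = qf A (B *m v).
Proof. by rewrite /qf adjmxM !mulmxA. Qed.

Lemma qf_sum2 n (A : 'M[C]_n) u w :
  qf A (u + w) = qf A u + bf u A w + bf w A u + qf A w.
Proof.
rewrite /qf /bf adjmxD !(mulmxDl, mulmxDr) !mxE; rewrite !addrA.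
congr (_ + _); rewrite -!addrA; congr (_ + _); by rewrite addrC.
Qed.

Definition ev n (j : 'I_n) : 'cV[C]_n := delta_mx j 0.

Lemma adj_ev n (j : 'I_n) : adjmx (ev j) = delta_mx 0 j.
Proof.
apply/matrixP => x y; rewrite /adjmx /ev !mxE.
by rewrite conjc_nat andbC.
Qed.

Lemma bf_ev n (A : 'M[C]_n) a b j k :
  bf (a *: ev j) A (b *: ev k) = a^* * b * A j k.
Proof.
rewrite /bf adjmxZ -!scalemxAl -scalemxAr adj_ev.
by rewrite -rowE /ev -colE !mxE mulrA.
Qed.

Lemma qf_ev n (A : 'M[C]_n) a j : qf A (a *: ev j) = a^* * a * A j j.
Proof. exact: bf_ev. Qed.

Lemma ge0_conj (z : C) : 0 <= z -> z^* = z.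
Proof. by move=> h; apply: conj_Creal; apply: ger0_real. Qed.

Lemma psdP n (A : 'M[C]_n) : psdmx A <-> forall v, 0 <= qf A v.
Proof.
split => [[_ H] v|H]; first exact: H.
split => //; apply/matrixP => i j.
rewrite /adjmx !mxE.
have Hi : (A i i)^* = A i i.
  by have := H (1 *: ev i); rewrite qf_ev conjC1 !mul1r => /ge0_conj.
have Hj : (A j j)^* = A j j.
  by have := H (1 *: ev j); rewrite qf_ev conjC1 !mul1r => /ge0_conj.
have := H (1 *: ev i + 1 *: ev j); rewrite qf_sum2 !bf_ev !qf_ev conjC1 !mul1r.
move=> /ge0_conj; rewrite !rmorphD /= Hi Hj => E1.
have := H (1 *: ev i + 'i *: ev j); rewrite qf_sum2 !bf_ev !qf_ev conjC1 !mul1r.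
rewrite !mulr1 conjCi.
move=> /ge0_conj; rewrite !rmorphD !rmorphM /= rmorphN /= conjCi Hi Hj => E2.
set x := A i j in E1 E2 *; set y := A j i in E1 E2 *.
have key : 2 * 'i * (y^* - x) = 'i * ((A i i + x^* + y^* + A j j) - (A i i + x + y + A j j))
   + ((A i i + - 'i * x^* + - - 'i * y^* + - - 'i * - 'i * A j j) -
      (A i i + 'i * x + - 'i * y + - 'i * 'i * A j j)) by ring.
move: key; rewrite E1 E2 !subrr mulr0 addr0 => /eqP.
rewrite mulf_eq0 subr_eq0 mulf_eq0 pnatr_eq0 /= (negbTE (neq0Ci _)) /=.
by move/eqP.
Qed.

Lemma ge0C (z : C) : 0 <= z -> exists r : R, 0 <= r /\ z = r%:C%C.
Proof. by case: z => a b /andP[/eqP -> ha]; exists a. Qed.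

Lemma lecR0 (r : R) : (0 <= r%:C%C) = (0 <= r).
Proof. by rewrite /Order.le /= eqxx. Qed.

Lemma psd_add n (A B : 'M[C]_n) : psdmx A -> psdmx B -> psdmx (A + B).
Proof.
move=> /psdP hA /psdP hB; apply/psdP => v; rewrite qfD; exact: addr_ge0.
Qed.

Lemma psd_scale n (A : 'M[C]_n) c : 0 <= c -> psdmx A -> psdmx (c *: A).
Proof. move=> c0 /psdP hA; apply/psdP => v; rewrite qfZ; exact: mulr_ge0. Qed.

Lemma psd_conj n m (A : 'M[C]_n) (B : 'M[C]_(n, m)) :
  psdmx A -> psdmx (adjmx B *m A *m B).
Proof. by move=> /psdP hA; apply/psdP => v; rewrite qf_conj. Qed.

Lemma psd_diag n (A : 'M[C]_n) i : psdmx A -> 0 <= A i i.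
Proof.
by move=> /psdP /(_ (1 *: ev i)); rewrite qf_ev conjC1 !mul1r.
Qed.

Lemma psd_anti n (A : 'M[C]_n) : psdmx A -> psdmx (- A) -> A = 0.
Proof.
move=> /psdP hA /psdP hN.
have H v : qf A v = 0.
  by apply/eqP; rewrite eq_le hA andbT -oppr_ge0 -qfN hN.
apply/matrixP => i j; rewrite mxE.
have Hi : A i i = 0 by have := H (1 *: ev i); rewrite qf_ev conjC1 !mul1r.
have Hj : A j j = 0 by have := H (1 *: ev j); rewrite qf_ev conjC1 !mul1r.
have := H (1 *: ev i + 1 *: ev j); rewrite qf_sum2 !bf_ev !qf_ev conjC1 !mul1r.
rewrite Hi Hj => E1.
have := H (1 *: ev i + 'i *: ev j); rewrite qf_sum2 !bf_ev !qf_ev conjC1 !mul1r.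
rewrite !mulr1 conjCi Hi Hj => E2.
set x := A i j in E1 E2 *; set y := A j i in E1 E2 *.
have key : 2 * 'i * x = 'i * (0 + x + y + 0)
   + (0 + 'i * x + - 'i * y + - 'i * 'i * 0) by ring.
move: key; rewrite E1 E2 mulr0 addr0 => /eqP.
rewrite mulf_eq0 mulf_eq0 pnatr_eq0 /= (negbTE (neq0Ci _)) /=.
by move/eqP.
Qed.

Lemma pow2E (l : R) : powR 2 l = expR (l * ln 2).
Proof. by rewrite /powR pnatr_eq0. Qed.

Lemma ln2_gt0 : 0 < ln (2 : R).
Proof. by apply: ln_gt0; rewrite ltr1n. Qed.

Lemma pow2_log (y : R) : 0 < y -> powR 2 (ln y / ln 2) = y.
Proof.
move=> y0; rewrite pow2E mulfVK ?lnK ?posrE //.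
by rewrite gt_eqF // ln2_gt0.
Qed.

Lemma real_closed_lemma (a b x : R) : 0 <= a ->
  (forall l, x < l -> b <= powR 2 l * a) -> b <= powR 2 x * a.
Proof.
move=> a0 hl; rewrite leNgt; apply/negP => hb.
have [a0'|apos] := eqVneq a 0.
  move: hb (hl (x + 1)); rewrite a0' !mulr0 => hb; rewrite ltrDl ltr01 => /(_ isT).
  by rewrite leNgt hb.
have {apos}apos : 0 < a by rewrite lt_neqAle eq_sym apos a0.
set y := b / a.
have hy : powR 2 x < y by rewrite /y ltr_pdivlMr.
have y0 : 0 < y by apply: le_lt_trans hy; exact: powR_ge0.
have xl : x < ln y / ln 2.
  rewrite ltr_pdivlMr ?ln2_gt0 // -ltr_expR lnK ?posrE // -pow2E //.
have [h1 h2] := midf_lt xl.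
have := hl _ h1; apply/negP; rewrite -ltNge.
have -> : b = y * a by rewrite /y mulfVK // gt_eqF.
rewrite ltr_pM2r // -{2}(pow2_log y0) !pow2E ltr_expR ltr_pM2r ?ln2_gt0 //.
Qed.

Lemma Dmax_ub n (A B : 'M[C]_n) l :
  loewner_le A ((powR 2 l)%:C%C *: B) -> (Dmax A B <= l%:E)%E.
Proof. by move=> h; apply: ereal_inf_lbound; exists l. Qed.

Lemma Dmax_mono n m (A1 B1 : 'M[C]_n) (A2 B2 : 'M[C]_m) :
  (forall l, loewner_le A1 ((powR 2 l)%:C%C *: B1) ->
             loewner_le A2 ((powR 2 l)%:C%C *: B2)) ->
  (Dmax A2 B2 <= Dmax A1 B1)%E.
Proof.
move=> h; apply: le_ereal_inf => _ [l hl <-]; exists l => //; exact: h.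
Qed.

Lemma Dmax_closed n (A B : 'M[C]_n) x : psdmx A -> psdmx B ->
  (Dmax A B <= x%:E)%E -> loewner_le A ((powR 2 x)%:C%C *: B).
Proof.
move=> pA pB hD; apply/psdP => v; rewrite qfB qfZ.
have [a [a0 ea]] := ge0C ((proj1 (psdP B)) pB v).
have [b [b0 eb]] := ge0C ((proj1 (psdP A)) pA v).
rewrite ea eb -rmorphM -rmorphB lecR0 subr_ge0.
apply: real_closed_lemma => // l xl.
have : (Dmax A B < l%:E)%E by apply: le_lt_trans hD _; rewrite lte_fin.
case/ereal_inf_lt => _ [l' hl' <-]; rewrite lte_fin => l'l.
have := (proj1 (psdP _)) hl' v; rewrite qfB qfZ ea eb -rmorphM -rmorphB lecR0 subr_ge0.
move=> h; apply: le_trans h _; apply: ler_wpM2r => //.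
by apply: ler_powR; [rewrite ler1n | exact: ltW].
Qed.

Lemma sum_tens k m (F : 'I_(k * m) -> C) :
  \sum_(p < k * m) F p = \sum_(a < k) \sum_(b < m) F (mxtens_index (a, b)).
Proof.
rewrite (reindex (@mxtens_index k m)) /=; last first.
  by apply: onW_bij; exists (@mxtens_unindex k m); [exact: mxtens_indexK|exact: mxtens_unindexK].
rewrite pair_big /=; apply: eq_bigr => -[a b] _ //.
Qed.

Definition lift1 m (B : 'M[C]_m) : 'M[C]_(1 * m) :=
  \matrix_(p, q) B (mxtens_unindex p).2 (mxtens_unindex q).2.

Lemma psd_lift1 m (B : 'M[C]_m) : psdmx (lift1 B) -> psdmx B.
Proof.
move=> /psdP h; apply/psdP => v.
have := h (\col_p v (mxtens_unindex p).2 0).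
rewrite !qfE sum_tens big_ord1.
under eq_bigr do rewrite sum_tens big_ord1.
by under eq_bigr do under eq_bigr do rewrite !mxE !mxtens_indexK /=.
Qed.

Lemma lift1_psd m (B : 'M[C]_m) : psdmx B -> psdmx (lift1 B).
Proof.
move=> /psdP h; apply/psdP => v.
have := h (\col_a v (mxtens_index (ord0, a)) 0).
rewrite !qfE sum_tens big_ord1.
under [in X in _ -> X]eq_bigr do rewrite sum_tens big_ord1.
move=> H; apply: (le_trans H); rewrite le_eqVlt; apply/orP; left; apply/eqP.
apply: eq_bigr => a _; apply: eq_bigr => b _; by rewrite !mxE !mxtens_indexK.
Qed.

Lemma ampl_lift1 m n (E : 'M[C]_m -> 'M[C]_n) (A : 'M[C]_m) :
  ampliation E (lift1 A) = lift1 (E A).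
Proof.
apply/matrixP => p q; rewrite !mxE.
suff -> : forall i j, blockmx (lift1 A) i j = A by [].
by move=> i j; apply/matrixP => a b; rewrite !mxE !mxtens_indexK.
Qed.

Lemma cp_pos m n (E : 'M[C]_m -> 'M[C]_n) A :
  completely_positive E -> psdmx A -> psdmx (E A).
Proof.
move=> cp pA; apply: psd_lift1; rewrite -ampl_lift1; apply: cp.
exact: lift1_psd.
Qed.

Section Lin.
Variables (m n : nat) (E : 'M[C]_m -> 'M[C]_n).
Hypothesis lin : linear E.
Let linE a u v : E (a *: u + v) = a *: E u + E v. Proof. exact: lin. Qed.
Lemma lin0 : E 0 = 0.
Proof.
have := linE 1 0 0; rewrite !scale1r addr0 => h.
by apply: (addrI (E 0)); rewrite addr0 -h.
Qed.
Lemma linZ a u : E (a *: u) = a *: E u.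
Proof. by have := linE a u 0; rewrite !addr0 lin0 addr0. Qed.
Lemma linD u v : E (u + v) = E u + E v.
Proof. by have := linE 1 u v; rewrite !scale1r. Qed.
Lemma linB u v : E (u - v) = E u - E v.
Proof. by rewrite linD -scaleN1r linZ scaleN1r. Qed.
End Lin.

Lemma dpi m n (E : 'M[C]_m -> 'M[C]_n) A B c :
  cptp E -> loewner_le A (c *: B) -> loewner_le (E A) (c *: E B).
Proof.
move=> [lin [cp _]] h; rewrite /loewner_le -linZ // -linB //.
exact: cp_pos.
Qed.

Lemma sum_delta k (F : 'I_k -> C) i : \sum_(j < k) F j *+ (i == j) = F i.
Proof.
rewrite (bigD1 i) //= eqxx mulr1n big1 ?addr0 // => j /negbTE.
by rewrite eq_sym => ->; rewrite mulr0n.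
Qed.

Lemma psd_tens_diag k d (Y : 'M[C]_k) (lam : 'rV[C]_d) :
  psdmx Y -> (forall j, 0 <= lam 0 j) -> psdmx (Y *t diag_mx lam).
Proof.
move=> /psdP hY hl; apply/psdP => v.
have -> : qf (Y *t diag_mx lam) v =
  \sum_(b < d) lam 0 b * qf Y (\col_a v (mxtens_index (a, b)) 0).
  rewrite qfE sum_tens.
  under eq_bigr do under eq_bigr do rewrite sum_tens.
  under eq_bigr do under eq_bigr do under eq_bigr do
    (under eq_bigr do rewrite tensmxE mxE !mulrnAr mulrnAl; rewrite sum_delta).
  rewrite exchange_big /=; apply: eq_bigr => b _.
  rewrite qfE big_distrr; apply: eq_bigr => a _.
  rewrite big_distrr; apply: eq_bigr => a' _.
  rewrite !mxE /=; ring.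
by apply: sumr_ge0 => b _; apply: mulr_ge0.
Qed.

Lemma adjmx_tens m n p q (A : 'M[C]_(m, n)) (B : 'M[C]_(p, q)) :
  adjmx (A *t B) = adjmx A *t adjmx B.
Proof. by rewrite /adjmx trmx_tens map_mxT. Qed.

Lemma adjmx1 n : adjmx (1%:M : 'M[C]_n) = 1%:M.
Proof. apply/matrixP => i j; rewrite /adjmx !mxE eq_sym; case: (i == j); [exact: conjc1 | exact: conjc0]. Qed.

Lemma spectral_psd d (w : 'M[C]_d) : psdmx w ->
  exists (Q : 'M[C]_d) (lam : 'rV[C]_d), [/\ adjmx Q *m Q = 1%:M, w = adjmx Q *m diag_mx lam *m Q &
                    forall j, 0 <= lam 0 j].
Proof.
move=> pw; have e : map_mx Num.conj w^T = w := proj1 pw.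
have nw : w \is normalmx by apply/normalmxP; rewrite e.
have := orthomx_spectralP nw.
rewrite invmx_unitary ?spectral_unitarymx //.
set Q := spectralmx w; set lam := spectral_diag w => ew.
have QQ : Q *m adjmx Q = 1%:M by apply/unitarymxP; exact: spectral_unitarymx.
have QQ' : adjmx Q *m Q = 1%:M by apply: mulmx1C.
exists Q, lam; split => //.
move=> j; have := psd_diag j (psd_conj (adjmx Q) pw).
rewrite adjmxK {1}ew !mulmxA QQ mul1mx -mulmxA QQ mulmx1 mxE eqxx mulr1n.
done.
Qed.

Lemma psd_tens k d (Y : 'M[C]_k) (w : 'M[C]_d) :
  psdmx Y -> psdmx w -> psdmx (Y *t w).
Proof.
move=> pY pw; have [Q [lam [QQ -> hl]]] := spectral_psd pw.
have -> : Y *t (adjmx Q *m diag_mx lam *m Q) =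
    adjmx (1%:M *t Q) *m (Y *t diag_mx lam) *m (1%:M *t Q).
  by rewrite adjmx_tens adjmx1 !tensmx_mul mul1mx mulmx1.
by apply: psd_conj; apply: psd_tens_diag.
Qed.

Lemma psd_compress k m (P : 'M[C]_m) (X : 'M[C]_(k * m)) i :
  psdmx X -> psdmx (\matrix_(a, a') (P *m blockmx X a a' *m adjmx P) i i).
Proof.
move=> /psdP pX; apply/psdP => v.
set w : 'cV[C]_(k * m) :=
  \col_p (v (mxtens_unindex p).1 0 * (P i (mxtens_unindex p).2)^*).
suff -> : qf (\matrix_(a, a') (P *m blockmx X a a' *m adjmx P) i i) v = qf X w.
  exact: pX.
rewrite !qfE sum_tens.
apply: eq_bigr => a _.
under [RHS]eq_bigr do rewrite sum_tens.
rewrite [RHS]exchange_big; apply: eq_bigr => a' _.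
rewrite [RHS]exchange_big.
rewrite mxE mxE big_distrr big_distrl; apply: eq_bigr => c' _ /=.
rewrite mxE big_distrl big_distrr big_distrl; apply: eq_bigr => c _ /=.
rewrite !mxE !mxtens_indexK /= rmorphM /=.
rewrite ?conjCK ?conjcK !mulrA.
by symmetry; rewrite mulrAC.
Qed.

Lemma tr2 (M : 'M[C]_2) : \tr M = M 0 0 + M 1 1.
Proof.
rewrite /mxtrace !big_ord_recl big_ord0 addr0.
have e : lift ord0 ord0 = 1 :> 'I_2 by apply: val_inj.
by rewrite e.
Qed.

Definition chan d (P : 'M[C]_2) (w0 w1 : 'M[C]_d) (X : 'M[C]_2) : 'M[C]_d :=
  (P *m X *m adjmx P) 0 0 *: w0 + (P *m X *m adjmx P) 1 1 *: w1.

Lemma chan_cptp d (P : 'M[C]_2) (w0 w1 : 'M[C]_d) :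
  adjmx P *m P = 1%:M -> density w0 -> density w1 -> cptp (chan P w0 w1).
Proof.
move=> PP [p0 t0] [p1 t1]; split; [|split].
- move=> a u v; rewrite /chan mulmxDr mulmxDl -scalemxAr -scalemxAl !mxE.
  by rewrite !scalerDl scalerDr !scalerA addrACA.
- move=> k X pX.
  have -> : ampliation (chan P w0 w1) X =
    (\matrix_(a, a') (P *m blockmx X a a' *m adjmx P) 0 0) *t w0 +
    (\matrix_(a, a') (P *m blockmx X a a' *m adjmx P) 1 1) *t w1.
    by apply/matrixP => p q; rewrite !mxE.
  by apply: psd_add; apply: psd_tens => //; apply: psd_compress.
- move=> X; rewrite /chan mxtraceD !mxtraceZ t0 t1 !mulr1 -tr2.
  by rewrite mxtrace_mulC mulmxA PP mul1mx.
Qed.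

Lemma herm_trig_diag n (T : 'M[C]_n) :
  adjmx T = T -> is_trig_mx T -> is_diag_mx T.
Proof.
move=> hT /is_trig_mxP tT; apply/is_diag_mxP => i j; rewrite neq_ltn => /orP[] lt.
  exact: tT.
rewrite -hT /adjmx !mxE tT //; exact: conjc0.
Qed.

Lemma codiag n (A B : 'M[C]_n) : adjmx A = A -> adjmx B = B ->
  A *m B = B *m A ->
  exists P : 'M[C]_n, [/\ adjmx P *m P = 1%:M, P *m adjmx P = 1%:M,
    is_diag_mx (P *m A *m adjmx P) & is_diag_mx (P *m B *m adjmx P)].
Proof.
move=> hA hB AB; have [P Pu /andP[tA tB]] := cotrigonalization2 AB.
have PP : P *m adjmx P = 1%:M by apply/unitarymxP.
have PP' : adjmx P *m P = 1%:M by apply: mulmx1C.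
have tA' : is_trig_mx (P *m A *m adjmx P) by move: tA; rewrite /similar_to conjymx.
have tB' : is_trig_mx (P *m B *m adjmx P) by move: tB; rewrite /similar_to conjymx.
exists P; split; [exact: PP' | exact: PP | |].
  apply: herm_trig_diag; last exact: tA'.
  by rewrite !adjmxM adjmxK hA mulmxA.
apply: herm_trig_diag; last exact: tB'.
by rewrite !adjmxM adjmxK hB mulmxA.
Qed.

Lemma psd_diagmx n (D : 'M[C]_n) :
  (forall i j, i != j -> D i j = 0) -> (forall i, 0 <= D i i) -> psdmx D.
Proof.
move=> hD hd; apply/psdP => v; rewrite qfE; apply: sumr_ge0 => i _.
rewrite (bigD1 i) //= big1 ?addr0.
  by rewrite mulrAC; apply: mulr_ge0 => //; rewrite mulrC mul_conjC_ge0.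
by move=> j ji; rewrite hD ?mulr0 ?mul0r // eq_sym.
Qed.

Lemma comb_eq d (r s : 'M[C]_d) (c0 c1 x0 y0 x1 y1 : C) :
  c0 *: (x0 *: r - y0 *: s) + c1 *: (x1 *: s - y1 *: r) =
  (c0 * x0 - c1 * y1) *: r + (c1 * x1 - c0 * y0) *: s.
Proof.
rewrite !scalerBr !scalerA !scalerBl addrACA [RHS]addrACA.
by congr (_ + _); rewrite addrC.
Qed.

Local Notation rc x := (real_complex R x).
Ltac fld := field; repeat (apply/andP; split); try done.
Ltac rlra := repeat match goal with H : @eq _ _ _ |- _ => clear H end; lra.

Lemma rcM (x y : R) : rc x * rc y = rc (x * y).
Proof. by rewrite rmorphM. Qed.
Lemma rcB (x y : R) : rc x - rc y = rc (x - y).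
Proof. by rewrite rmorphB. Qed.
Lemma rc1 : rc 1 = 1. Proof. by rewrite rmorph1. Qed.
Lemma rc0 : rc 0 = 0. Proof. by rewrite rmorph0. Qed.

Lemma find_omegas d (r s : 'M[C]_d) (a b : R) :
  density r -> density s -> 0 <= b -> b < a -> a <= 1 ->
  (0 < b -> loewner_le r (rc (a / b) *: s)) ->
  (a < 1 -> loewner_le s (rc ((1 - b) / (1 - a)) *: r)) ->
  exists w0 w1 : 'M[C]_d, [/\ density w0, density w1,
     rc a *: w0 + rc (1 - a) *: w1 = r & rc b *: w0 + rc (1 - b) *: w1 = s].
Proof.
move=> [pr tr] [ps ts] b0 ba a1 H1 H2.
have ab : a - b != 0 by rewrite subr_eq0 gt_eqF.
have ab0 : 0 < a - b by rewrite subr_gt0.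
have b1 : 1 - b != 0 by rewrite subr_eq0 gt_eqF // (lt_le_trans ba a1).
set x0 := (1 - b) / (a - b); set y0 := (1 - a) / (a - b).
set x1 := a / (a - b); set y1 := b / (a - b).
exists (rc x0 *: r - rc y0 *: s), (rc x1 *: s - rc y1 *: r); split.
- split; last first.
    rewrite raddfB /= !mxtraceZ tr ts !mulr1 rcB.
    by have -> : x0 - y0 = 1 by rewrite /x0 /y0; fld.
  have [a1'|a1'] := eqVneq a 1.
    rewrite /y0 a1' subrr mul0r rc0 scale0r subr0 /x0 a1' divff // rc1 scale1r.
    done.
  have a1s : a < 1 by rewrite lt_neqAle a1' a1.
  have a10 : 1 - a != 0 by rewrite subr_eq0 eq_sym.
  have -> : rc x0 *: r - rc y0 *: s = rc y0 *: (rc ((1 - b) / (1 - a)) *: r - s).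
    rewrite scalerBr scalerA rcM.
    by have -> : y0 * ((1 - b) / (1 - a)) = x0 by rewrite /x0 /y0; fld.
  apply: psd_scale; last exact: H2.
  by rewrite lecR0 /y0 divr_ge0 // ?subr_ge0 // ltW.
- split; last first.
    rewrite raddfB /= !mxtraceZ tr ts !mulr1 rcB.
    by have -> : x1 - y1 = 1 by rewrite /x1 /y1; fld.
  have [b0'|b0'] := eqVneq b 0.
    rewrite /y1 b0' mul0r rc0 scale0r subr0 /x1 b0' subr0 divff ?rc1 ?scale1r //.
    by rewrite gt_eqF // (le_lt_trans b0 ba).
  have b0s : 0 < b by rewrite lt_neqAle eq_sym b0' b0.
  have -> : rc x1 *: s - rc y1 *: r = rc y1 *: (rc (a / b) *: s - r).
    rewrite scalerBr scalerA rcM.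
    by have -> : y1 * (a / b) = x1 by rewrite /x1 /y1; fld.
  apply: psd_scale; last exact: H1.
  by rewrite lecR0 /y1 divr_ge0 // ltW.
- rewrite comb_eq !rcM !rcB.
  have -> : a * x0 - (1 - a) * y1 = 1 by rewrite /x0 /y1; fld.
  have -> : (1 - a) * x1 - a * y0 = 0 by rewrite /x1 /y0; fld.
  by rewrite rc1 rc0 scale1r scale0r addr0.
- rewrite comb_eq !rcM !rcB.
  have -> : b * x0 - (1 - b) * y1 = 0 by rewrite /x0 /y1; fld.
  have -> : (1 - b) * x1 - b * y0 = 1 by rewrite /x1 /y0; fld.
  by rewrite rc1 rc0 scale1r scale0r add0r.
Qed.

Lemma Dmax_transfer n m (A1 B1 : 'M[C]_n) (A2 B2 : 'M[C]_m) (c : R) :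
  (Dmax A2 B2 <= Dmax A1 B1)%E -> psdmx A2 -> psdmx B2 -> 0 < c ->
  loewner_le A1 (rc c *: B1) -> loewner_le A2 (rc c *: B2).
Proof.
move=> H pA pB c0 h.
have hD : (Dmax A1 B1 <= (ln c / ln 2)%:E)%E.
  by apply: Dmax_ub; rewrite pow2_log.
by have := Dmax_closed pA pB (le_trans H hD); rewrite pow2_log.
Qed.

Lemma ord2 (i : 'I_2) : i = 0 \/ i = 1.
Proof. by case: i => [[|[|//]]] ?; [left|right]; apply: val_inj. Qed.

Lemma loewner_diag n (P : 'M[C]_n) (TA TB : 'M[C]_n) (c : R) :
  is_diag_mx TA -> is_diag_mx TB ->
  (forall i, 0 <= rc c * TB i i - TA i i) ->
  loewner_le (adjmx P *m TA *m P) (rc c *: (adjmx P *m TB *m P)).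
Proof.
move=> /is_diag_mxP dA /is_diag_mxP dB h; rewrite /loewner_le.
have -> : rc c *: (adjmx P *m TB *m P) - adjmx P *m TA *m P =
    adjmx P *m (rc c *: TB - TA) *m P.
  by rewrite mulmxBr mulmxBl -scalemxAr -scalemxAl.
apply: psd_conj; apply: psd_diagmx => [i j ij|i]; rewrite !mxE ?h //.
by rewrite dA ?dB ?mulr0 ?subr0.
Qed.

Lemma main_bwd d (rho1 sigma1 : 'M[C]_2) (rho2 sigma2 : 'M[C]_d) :
  density rho1 -> density sigma1 -> rho1 *m sigma1 = sigma1 *m rho1 ->
  density rho2 -> density sigma2 ->
  (Dmax rho2 sigma2 <= Dmax rho1 sigma1)%E ->
  (Dmax sigma2 rho2 <= Dmax sigma1 rho1)%E ->
  exists E : 'M[C]_2 -> 'M[C]_d, cptp E /\ E rho1 = rho2 /\ E sigma1 = sigma2.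
Proof.
move=> dr1 ds1 comm dr2 ds2 H1 H2.
have [P [PP' PP dT dS]] := codiag (proj1 (proj1 dr1)) (proj1 (proj1 ds1)) comm.
set T := P *m rho1 *m adjmx P in dT *; set S := P *m sigma1 *m adjmx P in dS *.
have rT : rho1 = adjmx P *m T *m P.
  by rewrite /T !mulmxA PP' mul1mx -mulmxA PP' mulmx1.
have rS : sigma1 = adjmx P *m S *m P.
  by rewrite /S !mulmxA PP' mul1mx -mulmxA PP' mulmx1.
have pT : psdmx T by rewrite /T -{1}(adjmxK P); apply: psd_conj; exact: dr1.1.
have pS : psdmx S by rewrite /S -{1}(adjmxK P); apply: psd_conj; exact: ds1.1.
have trT : T 0 0 + T 1 1 = 1.
  by rewrite -tr2 /T mxtrace_mulC mulmxA PP' mul1mx; exact: dr1.2.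
have trS : S 0 0 + S 1 1 = 1.
  by rewrite -tr2 /S mxtrace_mulC mulmxA PP' mul1mx; exact: ds1.2.
have [p [p0 ep]] := ge0C (psd_diag 0 pT).
have [q [q0 eq]] := ge0C (psd_diag 0 pS).
have ep1 : T 1 1 = rc (1 - p) by rewrite -rcB rc1 -ep -trT [T 0 0 + _]addrC addrK.
have eq1 : S 1 1 = rc (1 - q) by rewrite -rcB rc1 -eq -trS [S 0 0 + _]addrC addrK.
have p1 : 0 <= 1 - p by rewrite -lecR0 -ep1; exact: psd_diag.
have q1 : 0 <= 1 - q by rewrite -lecR0 -eq1; exact: psd_diag.
have diag_ok (TA TB : 'M[C]_2) (a b c : R) :
    TA 0 0 = rc a -> TA 1 1 = rc (1 - a) -> TB 0 0 = rc b -> TB 1 1 = rc (1 - b) ->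
    0 <= c * b - a -> 0 <= c * (1 - b) - (1 - a) ->
    forall i, 0 <= rc c * TB i i - TA i i.
  move=> ha ha' hb hb' h0 h1 i; case: (ord2 i) => ->.
    by rewrite ha hb rcM rcB lecR0.
  by rewrite ha' hb' rcM rcB lecR0.
suff [w0 [w1 [dw0 dw1 e1 e2]]] : exists w0 w1 : 'M[C]_d, [/\ density w0, density w1,
    T 0 0 *: w0 + T 1 1 *: w1 = rho2 & S 0 0 *: w0 + S 1 1 *: w1 = sigma2].
  exists (chan P w0 w1); split; first exact: chan_cptp.
  by split.
have e1x : forall x : R, 1 - (1 - x) = x by move=> x; ring.
have [pq|pq|pq] := ltgtP p q.
-
  have h1 : 0 < 1 - q -> loewner_le rho2 (rc ((1 - p) / (1 - q)) *: sigma2).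
    move=> q1s; have q1n : 1 - q != 0 by rewrite gt_eqF.
    apply: (Dmax_transfer H1 dr2.1 ds2.1).
      by apply: divr_gt0 => //; rlra.
    rewrite rT rS; apply: loewner_diag; [exact: dT|exact: dS|]; apply: (diag_ok _ _ p q) => //.
      have -> : (1 - p) / (1 - q) * q - p = (q - p) / (1 - q).
        by fld.
      by apply: divr_ge0; rlra.
    have -> : (1 - p) / (1 - q) * (1 - q) - (1 - p) = 0.
      by fld.
    done.
  have h2 : 1 - p < 1 -> loewner_le sigma2 (rc ((1 - (1 - q)) / (1 - (1 - p))) *: rho2).
    rewrite !e1x => p1s; have p0s : 0 < p by rlra.
    have p0n : p != 0 by rewrite gt_eqF.
    apply: (Dmax_transfer H2 ds2.1 dr2.1); first by apply: divr_gt0 => //; rlra.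
    rewrite rT rS; apply: loewner_diag; [exact: dS|exact: dT|]; apply: (diag_ok _ _ q p) => //.
      have -> : q / p * p - q = 0 by fld.
      done.
    have -> : q / p * (1 - p) - (1 - q) = (q - p) / p by fld.
    by apply: divr_ge0; rlra.
  have hqp : 1 - q < 1 - p by rlra.
  have hp1 : 1 - p <= 1 by rlra.
  have [w0 [w1 [dw0 dw1 f1 f2]]] := find_omegas dr2 ds2 q1 hqp hp1 h1 h2.
  rewrite !e1x in f1 f2.
  exists w1, w0; split => //.
    by rewrite ep ep1 addrC.
  by rewrite eq eq1 addrC.
-
  have h1 : 0 < q -> loewner_le rho2 (rc (p / q) *: sigma2).
    move=> q0s; have q0n : q != 0 by rewrite gt_eqF.
    apply: (Dmax_transfer H1 dr2.1 ds2.1).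
      by apply: divr_gt0 => //; rlra.
    rewrite rT rS; apply: loewner_diag; [exact: dT|exact: dS|]; apply: (diag_ok _ _ p q) => //.
      have -> : p / q * q - p = 0 by fld.
      done.
    have -> : p / q * (1 - q) - (1 - p) = (p - q) / q by fld.
    by apply: divr_ge0; rlra.
  have h2 : p < 1 -> loewner_le sigma2 (rc ((1 - q) / (1 - p)) *: rho2).
    move=> p1s; have p1n : 1 - p != 0 by rewrite gt_eqF // subr_gt0.
    apply: (Dmax_transfer H2 ds2.1 dr2.1).
      by apply: divr_gt0 => //; rlra.
    rewrite rT rS; apply: loewner_diag; [exact: dS|exact: dT|]; apply: (diag_ok _ _ q p) => //.
      have -> : (1 - q) / (1 - p) * p - q = (p - q) / (1 - p).
        by fld.
      by apply: divr_ge0; rlra.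
    have -> : (1 - q) / (1 - p) * (1 - p) - (1 - q) = 0.
      by fld.
    done.
  have hp1 : p <= 1 by rlra.
  have [w0 [w1 [dw0 dw1 f1 f2]]] := find_omegas dr2 ds2 q0 pq hp1 h1 h2.
  exists w0, w1; split => //.
    by rewrite ep ep1.
  by rewrite eq eq1.
-
  have l1 : loewner_le rho2 (rc 1 *: sigma2).
    apply: (Dmax_transfer H1 dr2.1 ds2.1 ltr01).
    rewrite rT rS; apply: loewner_diag; [exact: dT|exact: dS|]; apply: (diag_ok _ _ p q) => //.
      by rewrite mul1r pq subrr.
    by rewrite mul1r pq subrr.
  have l2 : loewner_le sigma2 (rc 1 *: rho2).
    apply: (Dmax_transfer H2 ds2.1 dr2.1 ltr01).
    rewrite rT rS; apply: loewner_diag; [exact: dS|exact: dT|]; apply: (diag_ok _ _ q p) => //.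
      by rewrite mul1r pq subrr.
    by rewrite mul1r pq subrr.
  have e : sigma2 - rho2 = 0.
    apply: psd_anti; first by move: l1; rewrite /loewner_le rc1 scale1r.
    by move: l2; rewrite /loewner_le rc1 scale1r opprB.
  have {}e : sigma2 = rho2 by apply/eqP; rewrite -subr_eq0 e.
  exists rho2, rho2; split => //; rewrite -scalerDl ?trT ?trS ?scale1r //.
Qed.

End Q.

Unset Implicit Arguments.

Theorem lemma1 (R : realType) (d : nat)
    (rho1 sigma1 : 'M[R[i]]_2) (rho2 sigma2 : 'M[R[i]]_d) :
  density rho1 -> density sigma1 -> rho1 *m sigma1 = sigma1 *m rho1 ->
  density rho2 -> density sigma2 ->
  (exists E : 'M[R[i]]_2 -> 'M[R[i]]_d,
      cptp E /\ E rho1 = rho2 /\ E sigma1 = sigma2) <->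
  ((Dmax rho2 sigma2 <= Dmax rho1 sigma1)%E /\
   (Dmax sigma2 rho2 <= Dmax sigma1 rho1)%E).
Proof.
move=> dr1 ds1 comm dr2 ds2; split.
- case=> E [cE [e1 e2]]; split; apply: Dmax_mono => l h; rewrite -e1 -e2.
    exact: dpi h.
  exact: dpi h.
- by case=> H1 H2; apply: main_bwd.
Qed.
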